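(* Let $n\geq7$, let $u,v,u',v'\in G(J(P_n))$ with $u>_{\mathcal R}v$ and $u'>_{\mathcal R}v'$, and suppose $u'v'$ divides $uv$. (1) If $u\in\mathcal A$ and $v\in\mathcal C$, then $u'\in\mathcal A$ and $v'\in\mathcal C$. (2) If $u\in\mathcal B$ and $v\in\mathcal C$, then $u'\in\mathcal B$ and $v'\in\mathcal C$.
   Context: For $m\geq 1$, $P_m$ is the path graph on vertices $x_1,\ldots,x_m$ with edges $\{x_i,x_{i+1}\}$; $J(P_m)$ is its cover ideal (generated by $\prod_{x\in C}x$, $C$ a minimal vertex cover) and $G(I)$ denotes minimal monomial generators. The rooted list $\mathcal R(P_m)$: $\mathcal R(P_1)$ empty; $\mathcal R(P_2)=x_1,x_2$; $\mathcal R(P_3)=x_2,x_1x_3$; $\mathcal R(P_4)=x_1x_3,x_2x_3,x_2x_4$; for $m\geq5$, if $\mathcal R(P_{m-2})=u_1,\ldots,u_r$ and $\mathcal R(P_{m-3})=v_1,\ldots,v_s$, then $\mathcal R(P_m)=x_{m-1}u_1,\ldots,x_{m-1}u_r,x_mx_{m-2}v_1,\ldots,x_mx_{m-2}v_s$; it lists each element of $G(J(P_m))$ once, and $w>_{\mathcal R}w'$ iff $w$ precedes $w'$ in $\mathcal R(P_m)$. For $n\geq7$ the elements of $\mathcal R(P_n)$ are split into four sublists: $\mathcal A$ = those divisible by $x_{n-1}x_{n-3}$ (these are $x_{n-1}x_{n-3}w$, $w\in\mathcal R(P_{n-4})$); $\mathcal B$ = those divisible by $x_{n-1}$ but not $x_{n-3}$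 (these are $x_{n-1}x_{n-2}x_{n-4}w$, $w\in\mathcal R(P_{n-5})$); $\mathcal C$ = those divisible by $x_nx_{n-4}$ (these are $x_nx_{n-2}x_{n-4}w$, $w\in\mathcal R(P_{n-5})$); $\mathcal D$ = those divisible by $x_n$ but not $x_{n-4}$ (these are divisible by $x_nx_{n-2}x_{n-3}$). $\mathcal R(P_n)$ is the concatenation $\mathcal A,\mathcal B,\mathcal C,\mathcal D$. *)

(* Defs.v *)
(* Squarefree monomials in x_1..x_n are represented by the
   seq nat of the indices of their variables; monomial products are handled
   via exponent vectors (count_mem). *)
From mathcomp Require Import all_boot.
Set Implicit Arguments. Unset Strict Implicit. Unset Printing Implicit Defensive.

Definition mexp (s : seq nat) (i : nat) : nat := count_mem i s.

Definition mdvd (a b : seq nat) : Prop := forall i, mexp a i <= mexp b i.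

(* C is a vertex cover of the path P_n (vertices 1..n, edges {i,i+1}). *)
Definition is_cover (n : nat) (C : seq nat) : bool :=
  all (fun i => 0 < i <= n) C &&
  all (fun i => (i \in C) || (i.+1 \in C)) (iota 1 n.-1).

Definition min_cover (n : nat) (C : seq nat) : Prop :=
  is_cover n C /\
  forall D : seq nat, {subset D <= C} -> is_cover n D -> {subset C <= D}.

(* u is (the index list of) a minimal generator of the cover ideal J(P_n):
   u = prod_{x in C} x for a minimal vertex cover C. *)
Definition inG (n : nat) (u : seq nat) : Prop := uniq u /\ min_cover n u.

Fixpoint Rlist (m : nat) : seq (seq nat) :=
  match m with
  | 0 => [::]
  | 1 => [::]
  | 2 => [:: [:: 1]; [:: 2]]
  | 3 => [:: [:: 2]; [:: 1; 3]]
  | 4 => [:: [:: 1; 3]; [:: 2; 3]; [:: 2; 4]]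
  | S (S ((S ((S (S k)) as a)) as b)) =>
      (* b = m-2, a = m-3 *)
      map (cons b.+1) (Rlist b) ++ map (fun w => b.+2 :: b :: w) (Rlist a)
  end.

Definition rpos (n : nat) (u : seq nat) : nat := find (perm_eq u) (Rlist n).

Definition Rgt (n : nat) (u v : seq nat) : Prop := rpos n u < rpos n v.

Definition inA (n : nat) (u : seq nat) : Prop := (n.-1 \in u) /\ (n - 3 \in u).
Definition inB (n : nat) (u : seq nat) : Prop := (n.-1 \in u) /\ (n - 3 \notin u).
Definition inC (n : nat) (u : seq nat) : Prop := (n \in u) /\ (n - 4 \in u).
Definition inD (n : nat) (u : seq nat) : Prop := (n \in u) /\ (n - 4 \notin u).

(* Main.v *)
Require Import Defs.
From mathcomp Require Import all_boot zify.
Set Implicit Arguments. Unset Strict Implicit. Unset Printing Implicit Defensive.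

Lemma coverE n C : is_cover n C <-> ((forall i, i \in C -> 0 < i <= n) /\ (forall i, 0 < i < n -> (i \in C) || (i.+1 \in C))).
Proof.
rewrite /is_cover; split.
- case/andP => /allP H1 /allP H2; split => i Hi; first exact: H1.
  apply: H2; rewrite mem_iota; lia.
- case=> H1 H2; apply/andP; split; apply/allP => i Hi; first exact: H1.
  apply: H2; move: Hi; rewrite mem_iota; lia.
Qed.

Lemma min_drop n C i : min_cover n C -> i \in C -> (1 < i -> i.-1 \in C) -> (i < n -> i.+1 \in C) -> False.
Proof.
case=> Hc Hmin Hi Hl Hr; have [H1 H2] := proj1 (coverE n C) Hc.
have sub : {subset filter (predC1 i) C <= C} by move=> x; rewrite mem_filter => /andP[].
have cov : is_cover n (filter (predC1 i) C).
  apply/coverE; split => [x|x Hx]; first by rewrite mem_filter => /andP[_]; exact: H1.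
  rewrite !mem_filter /=.
  case: (eqVneq x i) => [Exi|Hxi].
  - subst x; rewrite Hr; last by lia.
    by rewrite gtn_eqF.
  - case: (eqVneq x.+1 i) => [Exi|Hxi1].
    + rewrite /= orbF; subst i; apply: Hl; lia.
    + by rewrite /=; apply: H2.
have := Hmin _ sub cov i Hi; by rewrite mem_filter /= eqxx.
Qed.

Lemma min_rem1 m w : uniq w -> min_cover m.+2 w -> m.+1 \in w -> min_cover m (rem m.+1 w).
Proof.
move=> Uw Mw Hin.
have [Hc Hmin] := Mw; have [H1 H2] := proj1 (coverE _ _) Hc.
have N2 : m.+2 \notin w.
  apply/negP => h; apply: (min_drop Mw h) => //; lia.
have memE x : (x \in rem m.+1 w) = (x != m.+1) && (x \in w) by rewrite mem_rem_uniq.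
split.
- apply/coverE; split => [x|x Hx]; rewrite ?memE.
  + case/andP => h1 h2; have := H1 _ h2.
    have : x != m.+2 by apply/eqP => e; move: N2; rewrite -e h2.
    lia.
  + have := H2 x ltac:(lia); case/orP => ->; rewrite ?orbT; lia.
- move=> D sub cov; have [D1 D2] := proj1 (coverE _ _) cov.
  have sub' : {subset m.+1 :: D <= w}.
    move=> x; rewrite inE; case/orP => [/eqP->//|h]; have := sub x h; rewrite memE; by case/andP.
  have cov' : is_cover m.+2 (m.+1 :: D).
    apply/coverE; split => [x|x Hx]; rewrite !inE.
    + case/orP => [/eqP->|h]; first lia. have := D1 x h; lia.
    + case: (ltnP x m) => hx.
      * have := D2 x ltac:(lia); case/orP => ->; rewrite ?orbT //.
      * case: (eqVneq x m) => [->|hx']; first by rewrite eqxx orbT.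
        have -> : x = m.+1 by lia. by rewrite eqxx.
  have := Hmin _ sub' cov' => H x; rewrite memE => /andP [h1 h2].
  have := H x h2; rewrite inE; case/orP => // /eqP e; by rewrite e eqxx in h1.
Qed.

Lemma min_rem2 m w : uniq w -> min_cover m.+3 w -> m.+3 \in w ->
  m.+1 \in w /\ min_cover m (rem m.+1 (rem m.+3 w)).
Proof.
move=> Uw Mw Hin.
have [Hc Hmin] := Mw; have [H1 H2] := proj1 (coverE _ _) Hc.
have N2 : m.+2 \notin w.
  apply/negP => h; apply: (min_drop Mw Hin) => //; lia.
have I1 : m.+1 \in w.
  have := H2 m.+1 ltac:(lia); by rewrite (negbTE N2) orbF.
split => //.
have memE x : (x \in rem m.+1 (rem m.+3 w)) = [&& x != m.+1, x != m.+3 & (x \in w)].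
  by rewrite mem_rem_uniq ?rem_uniq // inE /= mem_rem_uniq.
split.
- apply/coverE; split => [x|x Hx]; rewrite ?memE.
  + case/and3P => h1 h3 h2; have := H1 _ h2.
    have : x != m.+2 by apply/eqP => e; move: N2; rewrite -e h2.
    lia.
  + have := H2 x ltac:(lia); case/orP => ->; rewrite ?orbT; lia.
- move=> D sub cov; have [D1 D2] := proj1 (coverE _ _) cov.
  have sub' : {subset m.+3 :: m.+1 :: D <= w}.
    move=> x; rewrite !inE; case/or3P => [/eqP->//|/eqP->//|h]; have := sub x h; rewrite memE; by case/and3P.
  have cov' : is_cover m.+3 (m.+3 :: m.+1 :: D).
    apply/coverE; split => [x|x Hx]; rewrite !inE.
    + case/or3P => [/eqP->|/eqP->|h]; try lia. have := D1 x h; lia.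
    + case: (ltnP x m) => hx.
      * have := D2 x ltac:(lia); case/orP => ->; rewrite ?orbT //.
      * lia.
  have := Hmin _ sub' cov' => H x; rewrite memE => /and3P [h1 h3 h2].
  have := H x h2; rewrite !inE; case/or3P => // /eqP e; [by rewrite e eqxx in h3|by rewrite e eqxx in h1].
Qed.

Lemma Rlist_rec k : Rlist k.+4.+1 = map (cons k.+4) (Rlist k.+3) ++ map (fun w => k.+4.+1 :: k.+3 :: w) (Rlist k.+2).
Proof. by []. Qed.

Lemma pe m w s : uniq w -> uniq s -> (forall x, x \in w -> 0 < x <= m) ->
  (forall x, x \in s -> 0 < x <= m) -> (forall x, 0 < x <= m -> (x \in w) = (x \in s)) -> perm_eq w s.
Proof.
move=> Uw Us Hw Hs H; apply: uniq_perm => // x.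
case: (boolP (0 < x <= m)) => h; first exact: H.
case Ew: (x \in w); first by have := Hw _ Ew; rewrite (negbTE h).
case Es: (x \in s) => //; by have := Hs _ Es; rewrite (negbTE h).
Qed.

Ltac rw_w w := repeat match goal with H : (?a \in w) = _ |- context[?a \in w] => rewrite H end.

Ltac solve_pe M w Uw H1 :=
  apply: (@pe M w _ Uw) => //;
  [ move=> ?; rewrite !inE; lia
  | case=> [|[|[|[|[|?]]]]] //= _; rw_w w; rewrite !inE; by [] ].

Ltac pick M w Uw H1 := first [ apply/orP; left; solve_pe M w Uw H1 | apply/orP; right; pick M w Uw H1 ].

Ltac contra w Mw H2 :=
  first [ by have := H2 1 isT; rw_w w | by have := H2 2 isT; rw_w w | by have := H2 3 isT; rw_w w
        | (exfalso; apply: (min_drop Mw (i:=1)); rw_w w; solve [done | lia | move=> ?; rw_w w; done])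
        | (exfalso; apply: (min_drop Mw (i:=2)); rw_w w; solve [done | lia | move=> ?; rw_w w; done])
        | (exfalso; apply: (min_drop Mw (i:=3)); rw_w w; solve [done | lia | move=> ?; rw_w w; done])
        | (exfalso; apply: (min_drop Mw (i:=4)); rw_w w; solve [done | lia | move=> ?; rw_w w; done]) ].

Lemma Rcomplete m : 2 <= m -> forall w, uniq w -> min_cover m w -> has (perm_eq w) (Rlist m).
Proof.
elim/ltn_ind: m => m IH Hm w Uw Mw.
have [H1 H2] := proj1 (coverE _ _) (proj1 Mw).
case: m IH Hm w Uw Mw H1 H2 => [|[|[|[|[|k]]]]] IH Hm w Uw Mw H1 H2 //.
- case E1: (1 \in w); case E2: (2 \in w); rewrite /=; first [contra w Mw H2 | pick 2 w Uw H1].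
- case E1: (1 \in w); case E2: (2 \in w); case E3: (3 \in w); rewrite /=; first [contra w Mw H2 | pick 3 w Uw H1].
- case E1: (1 \in w); case E2: (2 \in w); case E3: (3 \in w); case E4: (4 \in w); rewrite /=; first [contra w Mw H2 | pick 4 w Uw H1].
- rewrite Rlist_rec has_cat.
  case I4: (k.+4 \in w).
  + apply/orP; left.
    have := IH k.+3 ltac:(lia) ltac:(lia) _ (rem_uniq _ Uw) (min_rem1 Uw Mw I4).
    case/hasP => s Hs Hp. apply/hasP; exists (k.+4 :: s); first exact: map_f.
    apply: perm_trans (perm_to_rem I4) _; by rewrite perm_cons.
  + apply/orP; right.
    have I5 : k.+4.+1 \in w by have := H2 k.+4 ltac:(lia); rewrite I4.
    have [I3 M'] := min_rem2 Uw Mw I5.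
    have := IH k.+2 ltac:(lia) ltac:(lia) _ (rem_uniq _ (rem_uniq _ Uw)) M'.
    case/hasP => s Hs Hp. apply/hasP; exists (k.+4.+1 :: k.+3 :: s); first exact: (map_f (fun w => _ :: _ :: w)).
    apply: perm_trans (perm_to_rem I5) _; rewrite perm_cons.
    have I3' : k.+3 \in rem k.+4.+1 w.
      rewrite mem_rem_uniq // inE /= I3 andbT; lia.
    apply: perm_trans (perm_to_rem I3') _; by rewrite perm_cons.
Qed.

Lemma order_lemma k u v : 2 <= k -> inG k.+4.+1 v -> k.+4 \in v -> k.+4 \notin u ->
  Rgt k.+4.+1 u v -> False.
Proof.
move=> Hk [Uv Mv] I4 N4; rewrite /Rgt /rpos Rlist_rec !find_cat.
have -> : has (perm_eq u) (map (cons k.+4) (Rlist k.+3)) = false.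
  apply/negP => /hasP [s /mapP [t _ ->] /perm_mem Hp].
  by move: N4; rewrite Hp inE eqxx.
have := @Rcomplete k.+4.+1 ltac:(lia) v Uv Mv; rewrite Rlist_rec has_cat => /orP [h|h].
  rewrite h; have := has_find (perm_eq v) (map (cons k.+4) (Rlist k.+3)); rewrite h.
  set B1 := map (cons k.+4) _. set B2 := map _ (Rlist k.+2). rewrite /=. lia.
exfalso; move/hasP: h => [s /mapP [t _ ->] /perm_mem Hp].
have I5 : k.+4.+1 \in v by rewrite Hp inE eqxx.
by apply: (min_drop Mv I5) => [_|]; [exact: I4 | lia].
Qed.

Theorem lemma3p10 (n : nat) (u v u' v' : seq nat) :
  7 <= n ->
  inG n u -> inG n v -> inG n u' -> inG n v' ->
  Rgt n u v -> Rgt n u' v' ->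
  mdvd (u' ++ v') (u ++ v) ->
  ((inA n u /\ inC n v) -> (inA n u' /\ inC n v')) /\
  ((inB n u /\ inC n v) -> (inB n u' /\ inC n v')).
Proof.
move=> Hn Gu Gv Gu' Gv' Huv Hu'v' Hd.
have [k Ek] : exists k, n = k.+4.+1 by exists (n - 5); lia.
subst n.
have Hk : 2 <= k by lia.
have E3 : k.+4.+1 - 3 = k.+2 by lia.
have E4 : k.+4.+1 - 4 = k.+1 by lia.
rewrite /inA /inB /inC /= E3 E4.
have [Uu Mu] := Gu; have [Uv Mv] := Gv; have [Uu' Mu'] := Gu'; have [Uv' Mv'] := Gv'.
have D i : (i \in u') + (i \in v') <= (i \in u) + (i \in v).
  by have := Hd i; rewrite /mexp !count_cat !count_uniq_mem.
have Fend C : min_cover k.+4.+1 C -> k.+4.+1 \in C -> k.+4 \notin C.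
  by move=> M h; apply/negP => h'; apply: (min_drop M h) => [_|]; [exact: h'|lia].
have Fcov C i : min_cover k.+4.+1 C -> 0 < i < k.+4.+1 -> (i \in C) || (i.+1 \in C).
  by move=> M; have [_ H2] := proj1 (coverE _ _) (proj1 M); apply: H2.
have Fmid C i : min_cover k.+4.+1 C -> 1 < i < k.+4.+1 -> i.-1 \in C -> i.+1 \in C -> i \notin C.
  by move=> M hi h1 h2; apply/negP => h; apply: (min_drop M h) => _; [exact: h1|exact: h2].
have Ford : k.+4 \in u -> k.+4.+1 \in v -> k.+4 \in u' /\ k.+4.+1 \in v'.
  move=> u4 v5.
  have u5 : k.+4.+1 \notin u by apply/negP => h; move: (Fend _ Mu h); rewrite u4.
  have v4 := Fend _ Mv v5.
  have := D k.+4; have := D k.+4.+1; have := Fcov _ k.+4 Mu' ltac:(lia); have := Fcov _ k.+4 Mv' ltac:(lia).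
  rewrite u4 (negbTE u5) (negbTE v4) v5.
  case E: (k.+4 \in u'); case E2: (k.+4 \in v'); case: (k.+4.+1 \in u'); case: (k.+4.+1 \in v') => //=.
  all: try by exfalso; apply: (order_lemma Hk Gv' E2 (negbT E) Hu'v').
split.
- case=> [[u4 u2] [v5 v1]]; have [u'4 v'5] := Ford u4 v5.
  have v4 := Fend _ Mv v5. have v'4 := Fend _ Mv' v'5.
  have v3 : k.+3 \in v by have := Fcov _ k.+3 Mv ltac:(clear -Hk; lia); rewrite (negbTE v4) orbF.
  have v'3 : k.+3 \in v' by have := Fcov _ k.+3 Mv' ltac:(clear -Hk; lia); rewrite (negbTE v'4) orbF.
  have u3 := Fmid _ k.+3 Mu ltac:(clear -Hk; lia) u2 u4.
  have v2 := Fmid _ k.+2 Mv ltac:(clear -Hk; lia) v1 v3.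
  have u'3 : k.+3 \notin u' by apply/negP => h; move: (D k.+3); rewrite h v'3 (negbTE u3) v3.
  have u'2 : k.+2 \in u' by have := Fcov _ k.+2 Mu' ltac:(clear -Hk; lia); rewrite (negbTE u'3) orbF.
  have v'2 : k.+2 \notin v' by apply/negP => h; move: (D k.+2); rewrite h u'2 (negbTE v2) u2.
  have v'1 : k.+1 \in v' by have := Fcov _ k.+1 Mv' ltac:(clear -Hk; lia); rewrite (negbTE v'2) orbF.
  done.
- case=> [[u4 u2] [v5 v1]]; have [u'4 v'5] := Ford u4 v5.
  have v4 := Fend _ Mv v5.
  have v3 : k.+3 \in v by have := Fcov _ k.+3 Mv ltac:(clear -Hk; lia); rewrite (negbTE v4) orbF.
  have v2 := Fmid _ k.+2 Mv ltac:(clear -Hk; lia) v1 v3.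
  have u'2 : k.+2 \notin u' by apply/negP => h; move: (D k.+2); rewrite h (negbTE u2) (negbTE v2).
  have v'2 : k.+2 \notin v' by apply/negP => h; move: (D k.+2); rewrite h (negbTE u2) (negbTE v2) addnC.
  have v'1 : k.+1 \in v' by have := Fcov _ k.+1 Mv' ltac:(clear -Hk; lia); rewrite (negbTE v'2) orbF.
  done.
Qed.
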